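(* For arbitrary positive integers $m$ and $n$, there exist a finite alphabet $A$, a letter $a\in A$, and languages $K,L\subseteq A^*$ with syntactic monoids $M$ and $N$ satisfying $|M|=m$, $|N|=n$, such that the syntactic monoid of the language $KaL=\{\,uav\mid u\in K,\ v\in L\,\}$ has exactly $mn(2^{mn}-1)+1$ elements.
   Context: The syntactic congruence of $R\subseteq A^*$ is $u\sim_R v$ iff for all $p,q\in A^*$, $puq\in R\Leftrightarrow pvq\in R$; the syntactic monoid of $R$ is $A^*/{\sim_R}$. *)

(* Defs.v *)
From mathcomp Require Import all_boot.
Set Implicit Arguments. Unset Strict Implicit. Unset Printing Implicit Defensive.

Definition language (A : Type) := seq A -> Prop.

Definition synt_equiv (A : Type) (R : language A) (u v : seq A) : Prop :=
  forall p q : seq A, R (p ++ u ++ q) <-> R (p ++ v ++ q).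

(* The syntactic monoid A^*/~_R has exactly k elements: there are k words,
   pairwise non-equivalent, such that every word is equivalent to one of them
   (i.e. a bijection 'I_k -> A^*/~_R, written out on representatives). *)
Definition synt_monoid_card (A : Type) (R : language A) (k : nat) : Prop :=
  exists w : 'I_k -> seq A,
    (forall i j, synt_equiv R (w i) (w j) -> i = j) /\
    (forall u : seq A, exists i, synt_equiv R u (w i)).

Definition marked_concat (A : Type) (K : language A) (a : A) (L : language A)
  : language A :=
  fun w => exists u v, K u /\ L v /\ w = u ++ a :: v.

(* Main.v *)
Require Import Defs.
From mathcomp Require Import all_boot all_algebra.
Import GRing.Theory.

Lemma card_from (A : Type) (R : language A) (D : finType) (S : {set D})
  (cl : seq A -> D) (rep : D -> seq A) k :
  #|S| = k -> (forall u, cl u \in S) -> (forall d, d \in S -> cl (rep d) = d) ->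
  (forall u v, cl u = cl v -> synt_equiv R u v) ->
  (forall u v, synt_equiv R u v -> cl u = cl v) -> synt_monoid_card R k.
Proof.
move=> hk hin hrep hsuf hnec; subst k.
exists (fun i => rep (enum_val i)); split.
- move=> i j /hnec; rewrite !hrep ?enum_valP //; apply: enum_val_inj.
- move=> u; exists (enum_rank_in (hin u) (cl u)); apply: hsuf.
  by rewrite enum_rankK_in // hrep.
Qed.

Section Constr.
Variables (m' n' : nat).
Local Notation M := 'I_m'.+1.
Local Notation N := 'I_n'.+1.
Definition Alph : finType := option (M * N).
Local Open Scope ring_scope.

Fixpoint mu (w : seq Alph) : M :=
  if w is c :: w' then (if c is Some xy then xy.1 + mu w' else mu w') else 0.
Fixpoint nu (w : seq Alph) : N :=
  if w is c :: w' then (if c is Some xy then xy.2 + nu w' else nu w') else 0.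
Fixpoint Pb (w : seq Alph) (st : M * N) : bool :=
  match w with
  | [::] => false
  | None :: w' => (st == (0, nu w')) || Pb w' st
  | Some xy :: w' => Pb w' (st.1 - xy.1, st.2)
  end.

Lemma mu_cat u v : mu (u ++ v) = mu u + mu v.
Proof. by elim: u => [|[[x y]|] u IH] /=; rewrite ?add0r ?IH ?addrA. Qed.
Lemma nu_cat u v : nu (u ++ v) = nu u + nu v.
Proof. by elim: u => [|[[x y]|] u IH] /=; rewrite ?add0r ?IH ?addrA. Qed.

Lemma Pb_cat u v st :
  Pb (u ++ v) st = Pb u (st.1, st.2 - nu v) || Pb v (st.1 - mu u, st.2).
Proof.
elim: u st => [|[[x y]|] u IH] [s t] /=.
- by rewrite subr0.
- by rewrite IH /= opprD addrA.
- by rewrite IH nu_cat orbA !xpair_eqE subr_eq.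
Qed.

Definition K : language Alph := fun u => mu u = 0.
Definition L : language Alph := fun v => nu v = 0.

Lemma Pb_ex w st : Pb w st -> exists u v, w = u ++ None :: v /\ mu u = st.1 /\ nu v = st.2.
Proof.
elim: w st => [|[[x y]|] w IH] [s t] //=.
- case/IH => u [v [-> [hu hv]]]; exists (Some (x, y) :: u), v; split => //=.
  by rewrite hu /= addrC subrK.
- case/orP => [/eqP [-> ->] | /IH [u [v [-> [hu hv]]]]].
  + by exists [::], w.
  + by exists (None :: u), v.
Qed.

Lemma KaL_Pb w : marked_concat K None L w <-> Pb w (0, 0).
Proof.
split.
- case=> u [v [Ku [Lv ->]]]; rewrite Pb_cat; apply/orP; right.
  by rewrite /= Ku Lv subrr eqxx.
- by case/Pb_ex => u [v [-> [hu hv]]]; exists u, v.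
Qed.

Lemma equiv_expand u v :
  synt_equiv (marked_concat K None L) u v <->
  (forall p q, Pb (p ++ u ++ q) (0, 0) = Pb (p ++ v ++ q) (0, 0)).
Proof.
split => H p q.
- by apply/idP/idP => /KaL_Pb h; apply/KaL_Pb; apply/(H p q).
- by split => /KaL_Pb h; apply/KaL_Pb; rewrite ?H // -H.
Qed.

Lemma Pb3 p u q : Pb (p ++ u ++ q) (0, 0) =
  [|| Pb p (0, - (nu u + nu q)), Pb u (- mu p, - nu q) | Pb q (- mu p - mu u, 0)].
Proof. by rewrite Pb_cat Pb_cat /= nu_cat !sub0r orbA. Qed.

Definition cl (u : seq Alph) : (M * N * {set M * N})%type :=
  if [set st | Pb u st] == setT then ((0, 0), setT)
  else ((mu u, nu u), [set st | Pb u st]).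

Lemma cl_equiv u v : cl u = cl v -> synt_equiv (marked_concat K None L) u v.
Proof.
move=> H; apply/equiv_expand => p q; rewrite !Pb3.
move: H; rewrite /cl; case: ifP => Hu; case: ifP => Hv.
- have fu : forall st, Pb u st.
    by move=> st; have := in_setT st; rewrite -(eqP Hu) inE.
  have fv : forall st, Pb v st.
    by move=> st; have := in_setT st; rewrite -(eqP Hv) inE.
  by rewrite fu fv !orbT.
- by case=> _ _ E; rewrite -E eqxx in Hv.
- by case=> _ _ E; rewrite E eqxx in Hu.
- case=> Emu Enu ES.
  have Pbe : forall st, Pb u st = Pb v st.
    by move=> st; have := congr1 (fun S : {set M * N} => st \in S) ES; rewrite !inE.
  by rewrite Emu Enu Pbe.
Qed.

Lemma cl_sep u v : synt_equiv (marked_concat K None L) u v -> cl u = cl v.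
Proof.
move=> Hs; have H := proj1 (equiv_expand u v) Hs.
have Pbe : forall st, Pb u st = Pb v st.
  move=> [s t]; have := H [:: Some (- s, 0)] [:: Some (0, - t)].
  by rewrite !Pb3 /= !addr0 !opprK !orbF => ->.
have ES : [set st | Pb u st] = [set st | Pb v st] by apply/setP => st; rewrite !inE.
rewrite /cl ES; case: ifP => // Hfull.
have : [exists st, ~~ Pb v st].
  rewrite -negb_forall; apply: contra (negbT Hfull) => /forallP h.
  by apply/eqP/setP => st; rewrite !inE h.
case/existsP => -[s0 t0] Hst.
have E1 : mu u = mu v.
  have := H [:: Some (- s0, 0)] [:: Some (s0 - mu u, - t0); None].
  rewrite !Pb3 /= !addr0 !opprK Pbe (negbTE Hst) /= subrr eqxx /=.
  move/esym; rewrite !xpair_eqE eqxx andbT.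
  by rewrite orbF subr_eq0 => /eqP/addrI/oppr_inj E.
have E2 : nu u = nu v.
  have := H [:: None; Some (- s0, t0 - nu u)] [:: Some (0, - t0)].
  rewrite !Pb3 /= !addr0 !opprK Pbe (negbTE Hst) /= !orbF.
  rewrite !opprB eqxx => /esym; rewrite xpair_eqE eqxx /= => /eqP E.
  by apply: oppr_inj; apply: (addrI t0); rewrite E.
by rewrite E1 E2.
Qed.

Definition blk (st : M * N) : seq Alph :=
  [:: Some (st.1, - st.2); None; Some (- st.1, st.2)].
Definition blks (l : seq (M * N)) : seq Alph := flatten (map blk l).

Lemma blks_cons x l : blks (x :: l) = blk x ++ blks l.
Proof. by []. Qed.

Lemma blks_mu l : mu (blks l) = 0.
Proof.
elim: l => [|[s t] l IH] //; rewrite blks_cons mu_cat IH /= !addr0 subrr //.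
Qed.
Lemma blks_nu l : nu (blks l) = 0.
Proof.
elim: l => [|[s t] l IH] //; rewrite blks_cons nu_cat IH /= !addr0 addNr //.
Qed.
Lemma blks_Pb l st : Pb (blks l) st = (st \in l).
Proof.
elim: l st => [|[s t] l IH] [s' t'] //.
rewrite blks_cons Pb_cat IH blks_nu /= !addr0 subrr !subr0 orbF in_cons.
by rewrite !xpair_eqE subr_eq0.
Qed.

Definition mk l x y : seq Alph := Some (0, y) :: blks l ++ [:: Some (x, 0)].
Lemma mk_mu l x y : mu (mk l x y) = x.
Proof. by rewrite /= mu_cat blks_mu /= !addr0 !add0r. Qed.
Lemma mk_nu l x y : nu (mk l x y) = y.
Proof. by rewrite /= nu_cat blks_nu /= !addr0. Qed.
Lemma mk_Pb l x y st : Pb (mk l x y) st = (st \in l).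
Proof.
case: st => s t; by rewrite /= Pb_cat /= blks_Pb !addr0 !subr0 orbF.
Qed.

Definition Sc : {set M * N * {set M * N}} :=
  ((0, 0), setT) |: setX setT [set~ setT].

Definition rep (d : M * N * {set M * N}) := mk (enum d.2) d.1.1 d.1.2.

Lemma cl_rep d : d \in Sc -> cl (rep d) = d.
Proof.
have Pr : [set st | Pb (rep d) st] = d.2.
  by apply/setP => st; rewrite inE mk_Pb mem_enum.
rewrite /cl Pr; case/setU1P => [-> | ]; first by rewrite eqxx.
case: d Pr => [[x y] P] _ /setXP [_]; rewrite in_setC1 => /negbTE /= ->.
by rewrite mu_cat nu_cat blks_mu blks_nu /= !addr0 !add0r.
Qed.

Lemma cl_in u : cl u \in Sc.
Proof.
rewrite /cl; case: ifP => h; first exact: setU11.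
by apply: setU1r; rewrite in_setX in_setT in_setC1 h.
Qed.

Lemma card_Sc : #|Sc| = (m'.+1 * n'.+1 * (2 ^ (m'.+1 * n'.+1) - 1) + 1)%N.
Proof.
rewrite cardsU1 cardsX cardsC1 cardsT card_prod !card_ord.
rewrite in_setX in_setC1 eqxx andbF /=.
rewrite -cardsT -powersetT card_powerset cardsT card_prod !card_ord.
by rewrite subn1 addnC.
Qed.

Lemma K_card : synt_monoid_card K m'.+1.
Proof.
apply: (@card_from _ _ _ [set: M] mu (fun x => [:: Some (x, 0)])).
- by rewrite cardsT card_ord.
- by move=> u; rewrite in_setT.
- by move=> x _ /=; rewrite addr0.
- by move=> u v E p q; rewrite /K !mu_cat E.
- move=> u v H; have := H [::] [:: Some (- mu u, 0)].
  rewrite /K /= !mu_cat /= addr0 subrr => -[h _]; have := h erefl.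
  by move/eqP; rewrite subr_eq0 => /eqP.
Qed.

Lemma L_card : synt_monoid_card L n'.+1.
Proof.
apply: (@card_from _ _ _ [set: N] nu (fun y => [:: Some (0, y)])).
- by rewrite cardsT card_ord.
- by move=> u; rewrite in_setT.
- by move=> x _ /=; rewrite addr0.
- by move=> u v E p q; rewrite /L !nu_cat E.
- move=> u v H; have := H [::] [:: Some (0, - nu u)].
  rewrite /L /= !nu_cat /= addr0 subrr => -[h _]; have := h erefl.
  by move/eqP; rewrite subr_eq0 => /eqP.
Qed.

Lemma KaL_card : synt_monoid_card (marked_concat K None L)
   (m'.+1 * n'.+1 * (2 ^ (m'.+1 * n'.+1) - 1) + 1)%N.
Proof.
apply: (@card_from _ _ _ Sc cl rep).
- exact: card_Sc.
- exact: cl_in.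
- exact: cl_rep.
- exact: cl_equiv.
- exact: cl_sep.
Qed.

End Constr.

Theorem proposition5 (m n : nat) (hm : 0 < m) (hn : 0 < n) :
  exists (A : finType) (a : A) (K L : language A),
    synt_monoid_card K m /\ synt_monoid_card L n /\
    synt_monoid_card (marked_concat K a L) (m * n * (2 ^ (m * n) - 1) + 1).
Proof.
case: m hm => // m' _; case: n hn => // n' _.
exists (Alph m' n'), None, (K m' n'), (L m' n').
split; [exact: K_card | split; [exact: L_card | exact: KaL_card]].
Qed.
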